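(* Let $G'=(V',E')$ be a graph and let $G=(V,E)$ be a vertex-induced subgraph of $G'$ such that: (i) every $v\in V'\setminus V$ has $\deg(v)<n$ in $G'$; (ii) $\operatorname{col}_{ve}(G)=n$; and (iii) in the vertex-edge marking game on $G$, Alice has a strategy which, at the end of each of her turns, leaves no unmarked vertex incident to $n-1$ marked edges. Then $\operatorname{col}_{ve}(G')=n$.
   Context: The vertex-edge marking game on a graph $G=(V,E)$ (finite or infinite) is played by Alice, who marks vertices, and Bob, who marks edges. Initially nothing is marked. The game proceeds in rounds $r=1,2,\dots$; in each round Alice first marks one unmarked vertex, then Bob marks one unmarked edge. For a finite graph the game ends when either player has no move; for an infinite graph it continues forever. After round $r$, the vertex score of $v$ is $0$ if $v$ is marked, and otherwise the number of marked edges incident to $v$. The $r$-round score is the supremum over $v\in V$ of the vertex scores after round $r$, and the final score of the game is the supremum of the $r$-round scores over all rounds. Bob has a winning strategy for score $s$ if, whatever Alice plays, Bob can force the final score to be at least $s$. The vertex-edge coloring number is $\operatorname{col}_{ve}(G)=\sup\{s : \text{Bob has a winning strategy for score } s\}+1$. *)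

(* Defs.v *)
From Stdlib Require Import List Arith ClassicalEpsilon.
Import ListNotations.

(** A simple graph: vertex type with a symmetric irreflexive adjacency relation.
    The edge {u,v} is represented by either ordered pair (u,v) / (v,u). *)
Record graph := Graph {
  gV :> Type;
  adj : gV -> gV -> Prop;
  adj_sym : forall u v, adj u v -> adj v u;
  adj_irrefl : forall v, ~ adj v v }.

Definition induced (G : graph) (P : G -> Prop) : graph.
Proof.
  refine (@Graph {v : G | P v} (fun u w => adj G (proj1_sig u) (proj1_sig w)) _ _).
  - intros u w H; exact (adj_sym G _ _ H).
  - intros v; exact (adj_irrefl G _).
Defined.

Definition deg_lt (G : graph) (v : G) (n : nat) : Prop :=
  exists l : list G, NoDup l /\ (forall u, adj G v u <-> In u l) /\ length l < n.

(** One round: Alice's vertex move and Bob's edge move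
    (None = the player has no legal move, i.e. the game has ended for them). *)
Definition round (G : graph) : Type := (option G * option (G * G))%type.
Definition history (G : graph) : Type := list (round G).

Definition vmarked {G : graph} (h : history G) (v : G) : Prop :=
  exists b, In (Some v, b) h.

Definition emarked {G : graph} (h : history G) (x y : G) : Prop :=
  exists a u w, In (a, Some (u, w)) h /\ ((u = x /\ w = y) \/ (u = y /\ w = x)).

Definition legalA {G : graph} (h : history G) (a : option G) : Prop :=
  match a with
  | Some v => ~ vmarked h v
  | None => forall v, vmarked h v
  end.

Definition legalB {G : graph} (h : history G) (b : option (G * G)) : Prop :=
  match b with
  | Some (x, y) => adj G x y /\ ~ emarked h x y
  | None => forall x y, adj G x y -> emarked h x y
  end.

Definition ind (P : Prop) : nat :=
  if excluded_middle_informative P then 1 else 0.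

Fixpoint nmarked_inc {G : graph} (h : history G) (v : G) : nat :=
  match h with
  | [] => 0
  | (_, Some (x, y)) :: t => ind (x = v \/ y = v) + nmarked_inc t v
  | (_, None) :: t => nmarked_inc t v
  end.

Definition vscore {G : graph} (h : history G) (v : G) : nat :=
  if excluded_middle_informative (vmarked h v) then 0 else nmarked_inc h v.

Definition AliceStrat (G : graph) : Type := history G -> option G.
Definition BobStrat (G : graph) : Type := history G -> option G -> option (G * G).

Fixpoint play {G : graph} (sA : AliceStrat G) (sB : BobStrat G) (r : nat) : history G :=
  match r with
  | 0 => []
  | S r' => let h := play sA sB r' in h ++ [(sA h, sB h (sA h))]
  end.

Definition play_afterA {G : graph} (sA : AliceStrat G) (sB : BobStrat G) (r : nat) : history G :=
  let h := play sA sB r in h ++ [(sA h, None)].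

(** Bob has a winning strategy for score s: a strategy that is legal as long as
    Alice plays legally, and forces the final score (sup over rounds r of the
    sup over v of the vertex scores after round r) to be at least s. *)
Definition bob_wins (G : graph) (s : nat) : Prop :=
  exists sB : BobStrat G, forall sA : AliceStrat G,
    (forall r, (forall k, k <= r -> legalA (play sA sB k) (sA (play sA sB k))) ->
       legalB (play sA sB r) (sB (play sA sB r) (sA (play sA sB r)))) /\
    ((forall k, legalA (play sA sB k) (sA (play sA sB k))) ->
       exists r v, s <= vscore (play sA sB r) v).

(** col_ve(G) = n, i.e. n = sup{s : Bob wins s} + 1 (the sup being a finite max). *)
Definition col_ve_is (G : graph) (n : nat) : Prop :=
  exists m, n = m + 1 /\ bob_wins G m /\ (forall s, bob_wins G s -> s <= m).

Definition alice_keeps_below (G : graph) (n : nat) : Prop :=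
  exists sA : AliceStrat G, forall sB : BobStrat G, forall r,
    (forall k, k < r -> legalB (play sA sB k) (sB (play sA sB k) (sA (play sA sB k)))) ->
    legalA (play sA sB r) (sA (play sA sB r)) /\
    (forall v, ~ vmarked (play_afterA sA sB r) v ->
       nmarked_inc (play_afterA sA sB r) v <> n - 1).

(* Main.v *)
Require Import Defs.
From Stdlib Require Import List Arith Lia ClassicalEpsilon Classical.
Import ListNotations.

Lemma ind_1 (Q : Prop) : Q -> ind Q = 1.
Proof. intros H; unfold ind; destruct (excluded_middle_informative Q); tauto. Qed.
Lemma ind_0 (Q : Prop) : ~ Q -> ind Q = 0.
Proof. intros H; unfold ind; destruct (excluded_middle_informative Q); tauto. Qed.
Lemma ind_le1 (Q : Prop) : ind Q <= 1.
Proof. unfold ind; destruct (excluded_middle_informative Q); lia. Qed.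
Lemma ind_iff (Q R : Prop) : (Q <-> R) -> ind Q = ind R.
Proof. intros H; unfold ind; destruct (excluded_middle_informative Q), (excluded_middle_informative R); tauto. Qed.
Lemma ind_imp (Q R : Prop) : (Q -> R) -> ind Q <= ind R.
Proof. intros H; unfold ind; destruct (excluded_middle_informative Q), (excluded_middle_informative R); try lia; tauto. Qed.

Definition bcontrib {G : graph} (b : option (G * G)) (v : G) : nat :=
  match b with Some (x, y) => ind (x = v \/ y = v) | None => 0 end.

Lemma nmarked_inc_app {G : graph} (h : history G) (r : round G) v :
  nmarked_inc (h ++ [r]) v = nmarked_inc h v + bcontrib (snd r) v.
Proof.
  destruct r as [a b].
  induction h as [|[a' b'] h IH]; simpl.
  - destruct b as [[x y]|]; simpl; lia.
  - simpl in IH; destruct b' as [[x y]|]; rewrite IH; lia.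
Qed.

Lemma vmarked_app {G : graph} (h : history G) (r : round G) v :
  vmarked (h ++ [r]) v <-> vmarked h v \/ fst r = Some v.
Proof.
  destruct r as [a b]; simpl.
  unfold vmarked; split.
  - intros [b' H]; apply in_app_or in H; destruct H as [H|[H|[]]].
    + left; eauto.
    + right; congruence.
  - intros [[b' H]|H].
    + exists b'; apply in_or_app; auto.
    + subst; exists b; apply in_or_app; simpl; auto.
Qed.

Lemma emarked_app {G : graph} (h : history G) (r : round G) x y :
  emarked (h ++ [r]) x y <-> emarked h x y \/
    (exists u w, snd r = Some (u, w) /\ ((u = x /\ w = y) \/ (u = y /\ w = x))).
Proof.
  destruct r as [a b]; simpl.
  unfold emarked; split.
  - intros (a' & u & w & H & E); apply in_app_or in H; destruct H as [H|[H|[]]].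
    + left; eauto 6.
    + right; exists u, w; split; [congruence|auto].
  - intros [(a' & u & w & H & E)|(u & w & Hb & E)].
    + exists a', u, w; split; auto; apply in_or_app; auto.
    + subst; exists a, u, w; split; auto; apply in_or_app; simpl; auto.
Qed.

Lemma play_S {G : graph} (sA : AliceStrat G) sB r :
  play sA sB (S r) = play sA sB r ++ @cons (round G) (sA (play sA sB r), sB (play sA sB r) (sA (play sA sB r))) nil.
Proof. reflexivity. Qed.

Lemma length_play {G : graph} (sA : AliceStrat G) sB r : length (play sA sB r) = r.
Proof. induction r; simpl; auto. rewrite length_app, IHr; simpl; lia. Qed.

Definition choose {A : Type} (Q : A -> Prop) (d : A) : A :=
  match excluded_middle_informative (exists x, Q x) with
  | left e => proj1_sig (constructive_indefinite_description _ e)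
  | right _ => d
  end.
Lemma choose_spec {A : Type} (Q : A -> Prop) d : (exists x, Q x) -> Q (choose Q d).
Proof.
  intros H; unfold choose; destruct (excluded_middle_informative _) as [e|n]; [|tauto].
  exact (proj2_sig (constructive_indefinite_description _ e)).
Qed.

Definition anyV {G : graph} (h : history G) : option G :=
  match excluded_middle_informative (exists v, ~ vmarked h v) with
  | left e => Some (proj1_sig (constructive_indefinite_description _ e))
  | right _ => None
  end.
Lemma anyV_legal {G : graph} (h : history G) : legalA h (anyV h).
Proof.
  unfold anyV; destruct (excluded_middle_informative _) as [e|n]; simpl.
  - exact (proj2_sig (constructive_indefinite_description _ e)).
  - intros v; apply NNPP; intros H; apply n; eauto.
Qed.
Definition anyE {G : graph} (h : history G) : option (G * G) :=
  match excluded_middle_informative (exists p : G * G, adj G (fst p) (snd p) /\ ~ emarked h (fst p) (snd p)) with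
  | left e => Some (proj1_sig (constructive_indefinite_description _ e))
  | right _ => None
  end.
Lemma anyE_legal {G : graph} (h : history G) : legalB h (anyE h).
Proof.
  unfold anyE; destruct (excluded_middle_informative _) as [e|n]; simpl.
  - destruct (constructive_indefinite_description _ e) as [[x y] H]; exact H.
  - intros x y Hxy; apply NNPP; intros H; apply n; exists (x, y); auto.
Qed.

Lemma play_afterA_eq {G : graph} (sA : AliceStrat G) sB r :
  play_afterA sA sB r = play sA sB r ++ @cons (round G) (sA (play sA sB r), None) nil.
Proof. reflexivity. Qed.

Inductive BL {G : graph} : history G -> Prop :=
| BL_nil : BL []
| BL_snoc h (r : round G) : BL h -> legalB h (snd r) -> BL (h ++ [r]).

Definition piece {G : graph} (b : option (G * G)) (w : G) : list G :=
  match b with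
  | Some (x, y) => if excluded_middle_informative (x = w) then [y]
                   else if excluded_middle_informative (y = w) then [x] else []
  | None => []
  end.

Fixpoint nbrs {G : graph} (h : history G) (w : G) : list G :=
  match h with
  | [] => []
  | (_, b) :: t => piece b w ++ nbrs t w
  end.

Lemma nbrs_app {G : graph} (h : history G) (r : round G) w :
  nbrs (h ++ [r]) w = nbrs h w ++ piece (snd r) w.
Proof. destruct r as [a b]; induction h as [|[a' b'] h IH]; simpl; [now rewrite app_nil_r|now rewrite IH, app_assoc]. Qed.

Lemma piece_len {G : graph} (b : option (G * G)) w : length (piece b w) = bcontrib b w.
Proof.
  destruct b as [[x y]|]; simpl; auto.
  destruct (excluded_middle_informative (x = w)); simpl.
  - rewrite ind_1; auto.
  - destruct (excluded_middle_informative (y = w)); simpl.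
    + rewrite ind_1; auto.
    + rewrite ind_0; tauto.
Qed.

Lemma in_piece {G : graph} (x y w u : G) :
  In u (piece (Some (x, y)) w) -> (x = w /\ u = y) \/ (y = w /\ u = x).
Proof.
  simpl; destruct (excluded_middle_informative (x = w)).
  - intros [H|[]]; auto.
  - destruct (excluded_middle_informative (y = w)); simpl; [intros [H|[]]; auto|tauto].
Qed.

Lemma nbrs_len {G : graph} (h : history G) w : length (nbrs h w) = nmarked_inc h w.
Proof.
  induction h as [|[a b] h IH]; simpl; auto.
  rewrite length_app, IH. destruct b as [[x y]|]; [|reflexivity].
  pose proof (piece_len (Some (x, y)) w) as E; simpl in E |- *. rewrite E; lia.
Qed.

Lemma in_nbrs {G : graph} (h : history G) w u : In u (nbrs h w) -> emarked h w u.
Proof.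
  induction h as [|[a b] h IH]; simpl; [tauto|].
  intros H; apply in_app_or in H; destruct H as [H|H].
  - destruct b as [[x y]|]; simpl in H; [|tauto].
    exists a, x, y; split; [left; auto|].
    apply in_piece in H; destruct H as [[]|[]]; subst; auto.
  - destruct (IH H) as (a' & x & y & Hi & E); exists a', x, y; split; auto; right; auto.
Qed.

Lemma BL_adj {G : graph} (h : history G) w u : BL h -> In u (nbrs h w) -> adj G w u.
Proof.
  induction 1 as [|h [a b] Hh IH Hl]; simpl; [tauto|].
  rewrite nbrs_app; intros H; apply in_app_or in H; destruct H as [H|H]; auto.
  destruct b as [[x y]|]; [|simpl in H; tauto]. destruct Hl as [Hxy _].
  apply in_piece in H; destruct H as [[]|[]]; subst; auto. apply adj_sym; auto.
Qed.

Lemma BL_nodup {G : graph} (h : history G) w : BL h -> NoDup (nbrs h w).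
Proof.
  induction 1 as [|h [a b] Hh IH Hl]; simpl; [constructor|].
  rewrite nbrs_app. apply NoDup_app; auto.
  - destruct b as [[x y]|]; simpl.
    + destruct (excluded_middle_informative (x = w)); [repeat constructor; auto|].
      destruct (excluded_middle_informative (y = w)); repeat constructor; auto.
    + constructor.
  - intros u Hu Hu2. apply in_nbrs in Hu.
    destruct b as [[x y]|]; [|simpl in Hu2; tauto]. destruct Hl as [_ Hne].
    apply Hne. destruct Hu as (a' & p & q & Hi & E).
    apply in_piece in Hu2; destruct Hu2 as [[]|[]]; subst; exists a', p, q; split; auto; tauto.
Qed.

Lemma deg_bound {G : graph} (h : history G) w n : BL h -> deg_lt G w n -> nmarked_inc h w < n.
Proof.
  intros Hb (l & _ & Hl & Hlen). rewrite <- nbrs_len.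
  enough (length (nbrs h w) <= length l) by lia.
  apply NoDup_incl_length; [apply BL_nodup; auto|].
  intros u Hu; apply Hl; eapply BL_adj; eauto.
Qed.

Lemma BL_play {G : graph} (sA : AliceStrat G) sB r :
  (forall k, k < r -> legalB (play sA sB k) (sB (play sA sB k) (sA (play sA sB k)))) ->
  BL (play sA sB r).
Proof.
  induction r; intros H; [constructor|]. rewrite play_S; constructor; auto.
Qed.

Definition emb {H : graph} {P : H -> Prop} (v : induced H P) : H := proj1_sig v.

Lemma emb_inj {H : graph} {P : H -> Prop} (u v : induced H P) : emb u = emb v -> u = v.
Proof.
  destruct u as [u pu], v as [v pv]; unfold emb; simpl; intros ->.
  f_equal; apply proof_irrelevance.
Qed.

Definition simA {H : graph} {P : H -> Prop} (s : history (induced H P)) (a : option H)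
  : option (induced H P) :=
  match a with
  | Some x => match excluded_middle_informative (P x) with
      | left p => if excluded_middle_informative (vmarked s (exist P x p : induced H P))
                  then anyV s else Some (exist P x p : induced H P)
      | right _ => anyV s end
  | None => anyV s
  end.

Lemma simA_legal {H : graph} {P : H -> Prop} (s : history (induced H P)) a : legalA s (simA s a).
Proof.
  destruct a as [x|]; simpl; [|apply anyV_legal].
  destruct (excluded_middle_informative (P x)) as [p|]; [|apply anyV_legal].
  destruct (excluded_middle_informative _); [apply anyV_legal|simpl; auto].
Qed.

Lemma simA_marks {H : graph} {P : H -> Prop} (s : history (induced H P)) (v : induced H P) :
  vmarked (s ++ [(simA s (Some (emb v)), None)]) v.
Proof.
  apply vmarked_app. destruct v as [x p]; unfold emb; simpl.
  destruct (excluded_middle_informative (P x)) as [p'|]; [|tauto].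
  assert (p' = p) by apply proof_irrelevance; subst.
  destruct (excluded_middle_informative _); auto.
Qed.

Definition simOf {H : graph} {P : H -> Prop} (sBG : BobStrat (induced H P)) (h : history H)
  : history (induced H P) :=
  fold_left (fun s r => s ++ [(simA s (fst r), sBG s (simA s (fst r)))]) h [].

Lemma simOf_app {H : graph} {P : H -> Prop} (sBG : BobStrat (induced H P)) h r :
  simOf sBG (h ++ [r]) =
  simOf sBG h ++ @cons (round (induced H P)) (simA (simOf sBG h) (fst r), sBG (simOf sBG h) (simA (simOf sBG h) (fst r))) nil.
Proof. unfold simOf; rewrite fold_left_app; reflexivity. Qed.

Lemma simOf_len {H : graph} {P : H -> Prop} (sBG : BobStrat (induced H P)) h :
  length (simOf sBG h) = length h.
Proof.
  induction h as [|r h IH] using rev_ind; [reflexivity|].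
  rewrite simOf_app, !length_app, IH; reflexivity.
Qed.

Definition sB1 {H : graph} {P : H -> Prop} (sBG : BobStrat (induced H P)) : BobStrat H :=
  fun h a => match sBG (simOf sBG h) (simA (simOf sBG h) a) with
             | Some (x, y) => Some (emb x, emb y)
             | None => anyE h
             end.

Definition sAG1 {H : graph} {P : H -> Prop} (sBG : BobStrat (induced H P)) (sA : AliceStrat H)
  : AliceStrat (induced H P) :=
  fun s => simA s (sA (play sA (sB1 sBG) (length s))).

Lemma sim_play1 {H : graph} {P : H -> Prop} (sBG : BobStrat (induced H P)) sA r :
  simOf sBG (play sA (sB1 sBG) r) = play (sAG1 sBG sA) sBG r.
Proof.
  induction r; [reflexivity|].
  rewrite !play_S, simOf_app, IHr. simpl fst.
  assert (E : sAG1 sBG sA (play (sAG1 sBG sA) sBG r) =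
              simA (play (sAG1 sBG sA) sBG r) (sA (play sA (sB1 sBG) r)))
    by (unfold sAG1 at 1; rewrite length_play; reflexivity).
  rewrite E; reflexivity.
Qed.

Lemma vscore_unmarked {G : graph} (h : history G) v : ~ vmarked h v -> vscore h v = nmarked_inc h v.
Proof. intros Hn; unfold vscore; destruct (excluded_middle_informative _); tauto. Qed.
Lemma vscore_marked {G : graph} (h : history G) v : vmarked h v -> vscore h v = 0.
Proof. intros Hn; unfold vscore; destruct (excluded_middle_informative _); tauto. Qed.

Lemma part1 (H : graph) (P : H -> Prop) (m : nat) :
  bob_wins (induced H P) m -> bob_wins H m.
Proof.
  intros [sBG HsBG]. exists (sB1 sBG). intros sA.
  destruct (HsBG (sAG1 sBG sA)) as [Hleg Hwin].
  assert (SAL : forall k, legalA (play (sAG1 sBG sA) sBG k)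
                   (sAG1 sBG sA (play (sAG1 sBG sA) sBG k)))
    by (intros k; apply simA_legal).
  set (hb := fun r => play sA (sB1 sBG) r).
  assert (SL : forall r, let s := simOf sBG (hb r) in
             legalB s (sBG s (simA s (sA (hb r))))).
  { intros r s. specialize (Hleg r (fun k _ => SAL k)).
    unfold s, hb; rewrite sim_play1.
    replace (simA (play (sAG1 sBG sA) sBG r) (sA (play sA (sB1 sBG) r)))
      with (sAG1 sBG sA (play (sAG1 sBG sA) sBG r)); auto.
    unfold sAG1 at 1; rewrite length_play; reflexivity. }
  assert (INV : forall r,
    (forall v, vmarked (hb r) (emb v) -> vmarked (simOf sBG (hb r)) v) /\
    (forall x y, emarked (hb r) (emb x) (emb y) -> emarked (simOf sBG (hb r)) x y) /\
    (forall v, nmarked_inc (simOf sBG (hb r)) v <= nmarked_inc (hb r) (emb v))).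
  { induction r as [|r [J1 [J2 J3]]].
    - simpl; split; [|split].
      + intros v [b []].
      + intros x y (a & u & w & [] & _).
      + intros v; simpl; lia.
    - specialize (SL r). unfold hb in *. rewrite play_S, simOf_app. simpl fst.
      set (h := play sA (sB1 sBG) r) in *. set (a := sA h) in *.
      set (s := simOf sBG h) in *. simpl in SL.
      split; [|split].
      + intros v Hv. apply vmarked_app in Hv; simpl in Hv. apply vmarked_app; simpl.
        destruct Hv as [Hv|Hv]; [left; auto|].
        rewrite Hv. pose proof (simA_marks s v) as Hm. apply vmarked_app in Hm; simpl in Hm.
        destruct Hm; auto.
      + intros x y Hxy. apply emarked_app in Hxy; simpl in Hxy. apply emarked_app; simpl.
        destruct Hxy as [Hxy|(u & w & Hb & E)]; [left; auto|].
        unfold sB1 in Hb; fold s in Hb.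
        destruct (sBG s (simA s a)) as [[x' y']|] eqn:Hs.
        * right. injection Hb as <- <-. exists x', y'; split; auto.
          destruct E as [[E1 E2]|[E1 E2]]; apply emb_inj in E1; apply emb_inj in E2; subst; auto.
        * left. pose proof (anyE_legal h) as HL. rewrite Hb in HL. destruct HL as [Hadj _].
          apply SL. destruct E as [[E1 E2]|[E1 E2]]; subst u w. exact Hadj. apply adj_sym; exact Hadj.
      + intros v. rewrite !nmarked_inc_app; simpl snd. specialize (J3 v).
        enough (bcontrib (sBG s (simA s a)) v <= bcontrib (sB1 sBG h a) (emb v)) by lia.
        unfold sB1; fold s. destruct (sBG s (simA s a)) as [[x' y']|]; simpl; [|lia].
        apply ind_imp. intros [<-|<-]; auto. }
  split.
  - intros r _. destruct (INV r) as [_ [J2 _]]. specialize (SL r). simpl in SL.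
    fold (hb r). unfold sB1.
    destruct (sBG (simOf sBG (hb r)) (simA (simOf sBG (hb r)) (sA (hb r)))) as [[x y]|];
      [|apply anyE_legal].
    destruct SL as [Hadj Hne]. split; auto.
  - intros _. destruct (Hwin SAL) as (r & v & Hv). exists r, (emb v).
    destruct (INV r) as [J1 [_ J3]]. rewrite <- sim_play1 in Hv. fold (hb r) in Hv |- *.
    destruct (classic (vmarked (simOf sBG (hb r)) v)) as [Hm|Hm].
    + rewrite vscore_marked in Hv; auto. lia.
    + rewrite vscore_unmarked in Hv; auto. rewrite vscore_unmarked.
      * specialize (J3 v); lia.
      * intros Hc; apply Hm, J1; auto.
Qed.

Inductive VS {G : graph} (sAG : AliceStrat G) : history G -> Prop :=
| VS_nil : VS sAG []
| VS_snoc L b : VS sAG L -> legalB L b -> VS sAG (L ++ @cons (round G) (sAG L, b) nil).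

Definition sBL {G : graph} (L : history G) : BobStrat G :=
  fun s a => choose (fun b => exists rest, L = s ++ @cons (round G) (a, b) rest) None.

Definition agrees {G : graph} (sAG : AliceStrat G) (sB : BobStrat G) (L : history G) : Prop :=
  forall L0 b0 rest, L = L0 ++ @cons (round G) (sAG L0, b0) rest -> sB L0 (sAG L0) = b0.

Lemma sBL_agrees {G : graph} (sAG : AliceStrat G) L : agrees sAG (sBL L) L.
Proof.
  intros L0 b0 rest E. unfold sBL.
  pose proof (choose_spec (fun b => exists rest, L = L0 ++ @cons (round G) (sAG L0, b) rest) None
               (ex_intro _ b0 (ex_intro _ rest E))) as [rest' E'].
  set (c := choose _ _) in *. clearbody c.
  rewrite E in E'. apply app_inv_head in E'. injection E' as E1 E2. auto.
Qed.

Lemma agrees_prefix {G : graph} (sAG : AliceStrat G) sB L r :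
  agrees sAG sB (L ++ [r]) -> agrees sAG sB L.
Proof.
  intros Ha L0 b0 rest E. apply (Ha L0 b0 (rest ++ [r])). rewrite E, <- app_assoc; reflexivity.
Qed.

Lemma VS_play {G : graph} (sAG : AliceStrat G) sB L :
  VS sAG L -> agrees sAG sB L ->
  play sAG sB (length L) = L /\
  (forall k, k < length L -> legalB (play sAG sB k) (sB (play sAG sB k) (sAG (play sAG sB k)))).
Proof.
  induction 1 as [|L b HL IH Hb]; intros Ha.
  - split; [reflexivity|simpl; intros; lia].
  - destruct (IH (agrees_prefix _ _ _ _ Ha)) as [E Hk].
    assert (Eb : sB L (sAG L) = b) by (apply (Ha L b []); reflexivity).
    rewrite length_app; simpl. replace (length L + 1) with (S (length L)) by lia.
    split.
    + rewrite play_S, E, Eb; reflexivity.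
    + intros k Hk'. destruct (Nat.eq_dec k (length L)) as [->|Hne].
      * rewrite E, Eb; auto.
      * apply Hk; lia.
Qed.

Lemma bcontrib_le1 {G : graph} (b : option (G * G)) v : bcontrib b v <= 1.
Proof. destruct b as [[x y]|]; simpl; [apply ind_le1|lia]. Qed.


Lemma VS_bound (G : graph) (n : nat) (sAG : AliceStrat G) :
  1 <= n ->
  (forall sB : BobStrat G, forall r,
    (forall k, k < r -> legalB (play sAG sB k) (sB (play sAG sB k) (sAG (play sAG sB k)))) ->
    (forall v, ~ vmarked (play_afterA sAG sB r) v ->
       nmarked_inc (play_afterA sAG sB r) v <> n - 1)) ->
  forall L, VS sAG L ->
  forall v, ~ vmarked (L ++ @cons (round G) (sAG L, None) nil) v -> nmarked_inc L v + 2 <= n.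
Proof.
  intros Hn Hk L HL.
  assert (KB : forall L, VS sAG L -> forall v, ~ vmarked (L ++ @cons (round G) (sAG L, None) nil) v ->
            nmarked_inc L v <> n - 1).
  { intros L' HL' v Hv. destruct (VS_play sAG (sBL L') L' HL' (sBL_agrees _ _)) as [E Hleg].
    specialize (Hk (sBL L') (length L') Hleg v). rewrite play_afterA_eq, E in Hk.
    rewrite nmarked_inc_app in Hk; simpl in Hk. specialize (Hk Hv); lia. }
  induction HL as [|L b HL IH Hb]; intros v Hv.
  - specialize (KB [] (VS_nil _) v Hv). simpl in *. lia.
  - pose proof (KB _ (VS_snoc _ L b HL Hb) v Hv) as K.
    assert (Hv' : ~ vmarked (L ++ @cons (round G) (sAG L, None) nil) v).
    { intros Hc; apply Hv. apply vmarked_app. left. apply vmarked_app. apply vmarked_app in Hc. auto. }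
    specialize (IH v Hv'). rewrite nmarked_inc_app in K |- *; simpl snd in *.
    pose proof (bcontrib_le1 b v). lia.
Qed.

Lemma VS_bound1 (G : graph) (n : nat) (sAG : AliceStrat G) :
  1 <= n ->
  (forall sB : BobStrat G, forall r,
    (forall k, k < r -> legalB (play sAG sB k) (sB (play sAG sB k) (sAG (play sAG sB k)))) ->
    (forall v, ~ vmarked (play_afterA sAG sB r) v ->
       nmarked_inc (play_afterA sAG sB r) v <> n - 1)) ->
  forall L, VS sAG L -> forall v, ~ vmarked L v -> nmarked_inc L v + 1 <= n.
Proof.
  intros Hn Hk L HL. destruct HL as [|L b HL Hb]; intros v Hv; [simpl; lia|].
  assert (Hv' : ~ vmarked (L ++ @cons (round G) (sAG L, None) nil) v).
  { intros Hc; apply Hv. apply vmarked_app. apply vmarked_app in Hc. auto. }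
  pose proof (VS_bound G n sAG Hn Hk L HL v Hv').
  rewrite nmarked_inc_app; simpl snd. pose proof (bcontrib_le1 b v). lia.
Qed.

Definition toReal {H : graph} {P : H -> Prop} (h : history H) (sa : option (induced H P)) : option H :=
  match sa with
  | Some x => if excluded_middle_informative (vmarked h (emb x)) then anyV h else Some (emb x)
  | None => anyV h
  end.

Definition lastB {H : graph} (h : history H) : option (H * H) := snd (last h (None, None)).

Definition fixMove {H : graph} (P : H -> Prop) (h : history H) : option H :=
  match lastB h with
  | Some (x, y) =>
      if excluded_middle_informative (P x /\ ~ vmarked h x) then Some x
      else if excluded_middle_informative (P y /\ ~ vmarked h y) then Some y
      else anyV h
  | None => anyV h
  end.

Definition step {H : graph} {P : H -> Prop} (sAG : AliceStrat (induced H P))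
  (st : history (induced H P) * bool) (rb : option (H * H)) : history (induced H P) * bool :=
  let L := fst st in
  match rb with
  | Some (x, y) =>
      match excluded_middle_informative (P x), excluded_middle_informative (P y) with
      | left px, left py =>
          (L ++ @cons (round (induced H P))
                 (sAG L, Some (exist P x px : induced H P, exist P y py : induced H P)) nil, false)
      | _, _ => (L, true)
      end
  | None => (L ++ @cons (round (induced H P)) (sAG L, None) nil, false)
  end.

Definition stOf {H : graph} {P : H -> Prop} (sAG : AliceStrat (induced H P)) (h : history H)
  : history (induced H P) * bool :=
  fold_left (fun st r => step sAG st (snd r)) h ([], false).

Lemma stOf_app {H : graph} {P : H -> Prop} (sAG : AliceStrat (induced H P)) h (r : round H) :
  stOf sAG (h ++ [r]) = step sAG (stOf sAG h) (snd r).
Proof. unfold stOf; rewrite fold_left_app; reflexivity. Qed.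

Definition sA2 {H : graph} {P : H -> Prop} (sAG : AliceStrat (induced H P)) : AliceStrat H :=
  fun h => if snd (stOf sAG h) then fixMove P h else toReal h (sAG (fst (stOf sAG h))).

Lemma sA2_legal {H : graph} {P : H -> Prop} (sAG : AliceStrat (induced H P)) h :
  legalA h (sA2 sAG h).
Proof.
  unfold sA2. destruct (snd (stOf sAG h)).
  - unfold fixMove. destruct (lastB h) as [[x y]|]; [|apply anyV_legal].
    destruct (excluded_middle_informative (P x /\ ~ vmarked h x)) as [[_ Hx]|]; [exact Hx|].
    destruct (excluded_middle_informative (P y /\ ~ vmarked h y)) as [[_ Hy]|]; [exact Hy|].
    apply anyV_legal.
  - unfold toReal. destruct (sAG (fst (stOf sAG h))) as [x|]; [|apply anyV_legal].
    destruct (excluded_middle_informative _); [apply anyV_legal|simpl; auto].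
Qed.

Fixpoint outcnt {H : graph} (P : H -> Prop) (h : history H) (w : H) : nat :=
  match h with
  | [] => 0
  | (_, Some (x, y)) :: t => ind (~ (P x /\ P y) /\ (x = w \/ y = w)) + outcnt P t w
  | (_, None) :: t => outcnt P t w
  end.

Definition ocontrib {H : graph} (P : H -> Prop) (b : option (H * H)) (w : H) : nat :=
  match b with Some (x, y) => ind (~ (P x /\ P y) /\ (x = w \/ y = w)) | None => 0 end.

Lemma outcnt_app {H : graph} (P : H -> Prop) (h : history H) (r : round H) w :
  outcnt P (h ++ [r]) w = outcnt P h w + ocontrib P (snd r) w.
Proof.
  destruct r as [a b].
  induction h as [|[a' b'] h IH]; simpl.
  - destruct b as [[x y]|]; simpl; lia.
  - simpl in IH; destruct b' as [[x y]|]; rewrite IH; lia.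
Qed.

Lemma vscore_le {G : graph} (h : history G) v : vscore h v <= nmarked_inc h v.
Proof. unfold vscore; destruct (excluded_middle_informative _); lia. Qed.

Definition INV {H : graph} (P : H -> Prop) (sAG : AliceStrat (induced H P))
  (h : history H) (L : history (induced H P)) (pend : bool) : Prop :=
  VS sAG L /\ BL h /\
  (forall v, vmarked L v \/ (pend = true /\ sAG L = Some v) -> vmarked h (emb v)) /\
  (forall x y : induced H P, emarked h (emb x) (emb y) <-> emarked L x y) /\
  (forall v : induced H P, nmarked_inc h (emb v) = nmarked_inc L v + outcnt P h (emb v)) /\
  (forall v : induced H P, ~ vmarked h (emb v) ->
     outcnt P h (emb v) <= 1 /\
     (outcnt P h (emb v) = 1 -> pend = true /\
        exists x y, lastB h = Some (x, y) /\ ~ (P x /\ P y) /\ (x = emb v \/ y = emb v))).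

Lemma lastB_app {H : graph} (h : history H) (r : round H) : lastB (h ++ [r]) = snd r.
Proof. unfold lastB; rewrite last_last; reflexivity. Qed.

Lemma emb_exist {H : graph} {P : H -> Prop} (x : H) (px : P x) (v : induced H P) :
  (exist P x px : induced H P) = v <-> x = emb v.
Proof.
  split; [intros <-; reflexivity|]. intros E. apply emb_inj. rewrite <- E. reflexivity.
Qed.

Lemma inv_step {H : graph} (P : H -> Prop) (sAG : AliceStrat (induced H P)) h L pend rb :
  stOf sAG h = (L, pend) ->
  INV P sAG h L pend -> legalB h rb ->
  INV P sAG (h ++ @cons (round H) (sA2 sAG h, rb) nil)
      (fst (step sAG (L, pend) rb)) (snd (step sAG (L, pend) rb)).
Proof.
  intros Est (I1 & I0 & I2 & I3 & I4 & I5) Hrb.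
  set (ra := sA2 sAG h).
  assert (Era : ra = if pend then fixMove P h else toReal h (sAG L))
    by (unfold ra, sA2; rewrite Est; reflexivity).
  clearbody ra.
  set (sa := sAG L).
  assert (SAM : forall v : induced H P, sa = Some v -> vmarked (h ++ @cons (round H) (ra, rb) nil) (emb v)).
  { intros v Hv. apply vmarked_app; simpl.
    destruct pend.
    - left. apply I2. right; auto.
    - rewrite Era. unfold toReal. fold sa. rewrite Hv.
      destruct (excluded_middle_informative (vmarked h (emb v))); auto. }
  assert (BL' : BL (h ++ @cons (round H) (ra, rb) nil)) by (constructor; auto).
  assert (OLD : forall v : induced H P, ~ vmarked (h ++ @cons (round H) (ra, rb) nil) (emb v) -> outcnt P h (emb v) = 0).
  { intros v Hv.
    assert (Hv0 : ~ vmarked h (emb v)) by (intros Hc; apply Hv, vmarked_app; auto).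
    destruct (I5 v Hv0) as [Hle Heq].
    destruct (Nat.eq_dec (outcnt P h (emb v)) 1) as [E1|]; [|lia].
    destruct (Heq E1) as (Hp & x & y & Hl & Hxy & Hv').
    exfalso; apply Hv, vmarked_app; simpl; right. rewrite Era, Hp. unfold fixMove. rewrite Hl.
    destruct v as [v pv]; unfold emb in *; simpl in *.
    destruct Hv' as [<-|<-].
    - destruct (excluded_middle_informative (P x /\ ~ vmarked h x)); [reflexivity|tauto].
    - destruct (excluded_middle_informative (P x /\ ~ vmarked h x)) as [[px _]|]; [tauto|].
      destruct (excluded_middle_informative (P y /\ ~ vmarked h y)); [reflexivity|tauto]. }
  destruct rb as [[x y]|].
  - assert (OUT : ~ (P x /\ P y) -> INV P sAG (h ++ @cons (round H) (ra, Some (x, y)) nil) L true).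
    { intros Hn.
      split; [exact I1|split; [exact BL'|split; [|split; [|split]]]].
      * intros v [Hv|[_ Hv]].
        -- apply vmarked_app; left; apply I2; auto.
        -- apply SAM; auto.
      * intros a b. rewrite emarked_app, <- I3; simpl. split; [|tauto].
        intros [Hm|(u & w & Hb & E)]; [auto|].
        injection Hb as <- <-. exfalso; apply Hn.
        destruct E as [[-> ->]|[-> ->]]; split; unfold emb; apply proj2_sig.
      * intros v. rewrite nmarked_inc_app, outcnt_app, I4; simpl.
        rewrite (ind_iff (~ (P x /\ P y) /\ (x = emb v \/ y = emb v)) (x = emb v \/ y = emb v)) by tauto.
        lia.
      * intros v Hv. rewrite outcnt_app, OLD by auto; simpl. split; [apply ind_le1|].
        intros E. split; auto. exists x, y. rewrite lastB_app; simpl. split; auto.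
        destruct (classic (~ (P x /\ P y) /\ (x = emb v \/ y = emb v))) as [Hc|Hc]; [exact Hc|].
        rewrite ind_0 in E by exact Hc. discriminate. }
    unfold step; simpl fst; simpl snd.
    destruct (excluded_middle_informative (P x)) as [px|npx];
    destruct (excluded_middle_informative (P y)) as [py|npy]; simpl.
    +
      destruct Hrb as [Hadj Hne].
      split; [|split; [exact BL'|split; [|split; [|split]]]].
      * constructor; auto. split; [exact Hadj|].
        intros Hc. apply Hne. apply (I3 (exist P x px) (exist P y py)). exact Hc.
      * intros v [Hv|[Hv _]]; [|discriminate].
        apply vmarked_app in Hv; simpl in Hv. destruct Hv as [Hv|Hv].
        -- apply vmarked_app; left; apply I2; auto.
        -- apply SAM; auto.
      * intros a b. rewrite emarked_app, emarked_app, I3; simpl. split.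
        -- intros [Hm|(u & w & Hb & E)]; [left; auto|right].
           injection Hb as <- <-. exists (exist P x px), (exist P y py); split; auto.
           destruct E as [[E1 E2]|[E1 E2]]; [left|right]; split; apply emb_inj; assumption.
        -- intros [Hm|(u & w & Hb & E)]; [left; auto|right].
           injection Hb as <- <-. exists x, y; split; auto.
           destruct E as [[<- <-]|[<- <-]]; [left|right]; split; reflexivity.
      * intros v. rewrite nmarked_inc_app, nmarked_inc_app, outcnt_app, I4; simpl.
        rewrite (ind_0 (~ (P x /\ P y) /\ _)) by tauto.
        rewrite (ind_iff (x = emb v \/ y = emb v) ((exist P x px : induced H P) = v \/ (exist P y py : induced H P) = v)).
        2:{ split; intros [E|E]; [left|right|left|right]; try (apply emb_inj; exact E); subst; reflexivity. }
        rewrite Nat.add_0_r, <- !Nat.add_assoc; f_equal; apply Nat.add_comm.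
      * intros v Hv. rewrite outcnt_app, OLD by auto; simpl.
        rewrite (ind_0 (~ (P x /\ P y) /\ _)) by tauto. lia.
    + apply OUT; tauto.
    + apply OUT; tauto.
    + apply OUT; tauto.
  - unfold step; simpl.
    split; [|split; [exact BL'|split; [|split; [|split]]]].
    + constructor; auto. intros a b Hab. apply I3. apply Hrb. exact Hab.
    + intros v [Hv|[Hv _]]; [|discriminate].
      apply vmarked_app in Hv; simpl in Hv. destruct Hv as [Hv|Hv].
      * apply vmarked_app; left; apply I2; auto.
      * apply SAM; auto.
    + intros a b. rewrite emarked_app, emarked_app, I3; simpl.
      split; (intros [Hm|(u & w & Hb & E)]; [left; auto|discriminate]).
    + intros v. rewrite nmarked_inc_app, nmarked_inc_app, outcnt_app, I4; simpl. lia.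
    + intros v Hv. rewrite outcnt_app, OLD by auto; simpl. lia.
Qed.

Lemma part2 (H : graph) (P : H -> Prop) (n m s : nat) :
  n = m + 1 -> (forall v : H, ~ P v -> deg_lt H v n) ->
  alice_keeps_below (induced H P) n -> bob_wins H s -> s <= m.
Proof.
  intros En Hdeg [sAG HsAG] [sB HsB].
  destruct (HsB (sA2 sAG)) as [Hleg Hwin].
  assert (BLEG : forall r, legalB (play (sA2 sAG) sB r)
            (sB (play (sA2 sAG) sB r) (sA2 sAG (play (sA2 sAG) sB r))))
    by (intros r; apply Hleg; intros; apply sA2_legal).
  assert (INVr : forall r, INV P sAG (play (sA2 sAG) sB r)
            (fst (stOf sAG (play (sA2 sAG) sB r))) (snd (stOf sAG (play (sA2 sAG) sB r)))).
  { induction r as [|r IH].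
    - simpl. split; [constructor|split; [constructor|split; [|split; [|split]]]].
      + intros v [[b []]|[[=] _]].
      + intros x y; split; intros (a & u & w & [] & _).
      + intros v; reflexivity.
      + intros v _; simpl; split; [lia|discriminate].
    - rewrite play_S, stOf_app; simpl snd.
      destruct (stOf sAG (play (sA2 sAG) sB r)) as [L pend] eqn:Est.
      apply inv_step; auto. }
  assert (KB : forall sBG : BobStrat (induced H P), forall r,
    (forall k, k < r -> legalB (play sAG sBG k) (sBG (play sAG sBG k) (sAG (play sAG sBG k)))) ->
    (forall v, ~ vmarked (play_afterA sAG sBG r) v ->
       nmarked_inc (play_afterA sAG sBG r) v <> n - 1))
    by (intros sBG r Hk; exact (proj2 (HsAG sBG r Hk))).
  assert (Hn1 : 1 <= n) by lia.
  destruct (Hwin (fun k => sA2_legal sAG _)) as (r & w & Hw).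
  destruct (INVr r) as (I1 & I0 & I2 & I3 & I4 & I5).
  set (h := play (sA2 sAG) sB r) in *.
  set (L := fst (stOf sAG h)) in *. set (pend := snd (stOf sAG h)) in *.
  destruct (classic (P w)) as [pw|npw].
  - set (v := exist P w pw : induced H P).
    destruct (classic (vmarked h w)) as [Hm|Hm].
    + rewrite vscore_marked in Hw; auto. lia.
    + rewrite vscore_unmarked in Hw; auto.
      pose proof (I4 v) as E4. pose proof (I5 v Hm) as [Hle Heq].
      change (emb v) with w in E4, Hle, Heq.
      destruct (Nat.eq_dec (outcnt P h w) 1) as [E1|E1].
      * destruct (Heq E1) as [Hp _].
        assert (Hv : ~ vmarked (L ++ @cons (round (induced H P)) (sAG L, None) nil) v).
        { intros Hc. apply vmarked_app in Hc; simpl in Hc. apply Hm. apply (I2 v).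
          destruct Hc; auto. }
        pose proof (VS_bound _ n sAG Hn1 KB L I1 v Hv). lia.
      * assert (Hv : ~ vmarked L v) by (intros Hc; apply Hm, (I2 v); auto).
        pose proof (VS_bound1 _ n sAG Hn1 KB L I1 v Hv). lia.
  - pose proof (deg_bound h w n I0 (Hdeg w npw)). pose proof (vscore_le h w). lia.
Qed.

Theorem theorem4p3 (G' : graph) (P : G' -> Prop) (n : nat) :
  (forall v : G', ~ P v -> deg_lt G' v n) ->
  col_ve_is (induced G' P) n ->
  alice_keeps_below (induced G' P) n ->
  col_ve_is G' n.
Proof.
  intros Hdeg (m & En & Hbw & Hmax) Hak.
  exists m; split; [exact En|split].
  - exact (part1 G' P m Hbw).
  - intros s Hs. exact (part2 G' P n m s En Hdeg Hak Hs).
Qed.
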